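(* Let $N\ge 2$, $0<k\le N$, and $\mathfrak D_0(N,k)=\mathfrak D(N,k)\cap\mathfrak{su}(N)$, where $\mathfrak D(N,k)$ is the set of skew-Hermitian $N\times N$ complex matrices $A$ with $A_{ij}=0$ unless $k$ divides $i-j$. Then the discrete Laplacian $\Delta_N$ restricts to a vector space automorphism (linear bijection) of $\mathfrak D_0(N,k)$. Consequently the quantized Euler equations $\dot W=[\Delta_N^{-1}W,W]_N$ on $\mathfrak{su}(N)$ restrict to $\mathfrak D_0(N,k)$: the vector field $W\mapsto[\Delta_N^{-1}W,W]_N$ maps $\mathfrak D_0(N,k)$ into itself.
   Context: $\mathfrak{su}(N)$ is the Lie algebra of traceless skew-Hermitian $N\times N$ matrices, and $[A,B]_N=N^{3/2}(AB-BA)$. Let $\varrho$ be the irreducible $N$-dimensional representation of $\mathfrak{su}(2)$ by skew-Hermitian matrices and $X_1,X_2,X_3$ a basis of $\mathfrak{su}(2)$ orthonormal with respect to a non-degenerate ad-invariant bilinear form; the discrete Laplacian is $\Delta_N(Y)=\sum_{i=1}^3[\varrho(X_i),[\varrho(X_i),Y]]$, which is invertible on $\mathfrak{su}(N)$, and $\Delta_N^{-1}$ denotes its inverse there. *)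

(* Defs.v *)
From HB Require Import structures.
From mathcomp Require Import all_boot all_order all_algebra.
Set Implicit Arguments. Unset Strict Implicit. Unset Printing Implicit Defensive.
Import Order.TTheory GRing.Theory Num.Theory.
Local Open Scope ring_scope.

Section Defs.
Variable C : numClosedFieldType.

Definition skew_herm (N : nat) (A : 'M[C]_N) : Prop :=
  (map_mx Num.conj A)^T = - A.

Definition suN (N : nat) (A : 'M[C]_N) : Prop := skew_herm A /\ \tr A = 0.

Definition Dmat (N k : nat) (A : 'M[C]_N) : Prop :=
  skew_herm A /\
  forall i j : 'I_N, ~ (((k : int) %| (i : int) - (j : int))%Z) -> A i j = 0.

Definition D0 (N k : nat) (A : 'M[C]_N) : Prop := Dmat k A /\ suN A.

Definition comm (N : nat) (A B : 'M[C]_N) : 'M[C]_N := A *m B - B *m A.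

Definition qbracket (N : nat) (A B : 'M[C]_N) : 'M[C]_N :=
  (N%:R * sqrtC (N%:R)) *: comm A B.

(* Standard spin s = (N-1)/2 representation, basis index m : 'I_N,
   weight mu m = s - m. *)
Definition spin (N : nat) : C := (N%:R - 1) / 2%:R.
Definition weight (N : nat) (m : nat) : C := spin N - m%:R.

Definition Jplus (N : nat) : 'M[C]_N :=
  \matrix_(i, j) (if (i.+1 == j :> nat)
     then sqrtC (spin N * (spin N + 1) - weight N j * (weight N j + 1))
     else 0).
Definition Jminus (N : nat) : 'M[C]_N := (Jplus N)^T.
Definition J3 (N : nat) : 'M[C]_N := \matrix_(i, j) (if i == j then weight N i else 0).

(* Skew-Hermitian images rho(e_1), rho(e_2), rho(e_3) of the standard basis
   of su(2) ([e1,e2]=e3, [e2,e3]=e1, [e3,e1]=e2):  S_k = -i J_k. *)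
Definition rhoS (N : nat) (j : 'I_3) : 'M[C]_N :=
  if j == 0 :> nat then (- 'i / 2%:R) *: (Jplus N + Jminus N)
  else if j == 1 :> nat then (- 1 / 2%:R) *: (Jplus N - Jminus N)
  else (- 'i) *: J3 N.

Definition rhoX (N : nat) (a : 'M[C]_3) (i : 'I_3) : 'M[C]_N :=
  \sum_j a i j *: rhoS N j.

Definition Lap (N : nat) (a : 'M[C]_3) (Y : 'M[C]_N) : 'M[C]_N :=
  \sum_i comm (rhoX N a i) (comm (rhoX N a i) Y).

End Defs.

(* Main.v *)
Require Import Defs.
From HB Require Import structures.
From mathcomp Require Import all_boot all_order all_algebra.
From mathcomp Require Import ring.
Import Order.TTheory GRing.Theory Num.Theory.
Set Implicit Arguments. Unset Strict Implicit. Unset Printing Implicit Defensive.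
Local Open Scope ring_scope.
Section S.
Variable C : numClosedFieldType.
Variable N : nat.
Implicit Types A B X Y Z : 'M[C]_N.

Definition adj A : 'M[C]_N := (map_mx Num.conj A)^T.

Lemma adjE A i j : adj A i j = (A j i)^*.
Proof. by rewrite !mxE. Qed.

Lemma adjK A : adj (adj A) = A.
Proof. by apply/matrixP=> i j; rewrite !adjE conjCK. Qed.

Lemma adjD A B : adj (A + B) = adj A + adj B.
Proof. by apply/matrixP=> i j; rewrite !mxE rmorphD. Qed.

Lemma adjN A : adj (- A) = - adj A.
Proof. by apply/matrixP=> i j; rewrite !mxE rmorphN. Qed.

Lemma adjB A B : adj (A - B) = adj A - adj B.
Proof. by rewrite adjD adjN. Qed.

Lemma adjZ x A : adj (x *: A) = x^* *: adj A.
Proof. by apply/matrixP=> i j; rewrite !mxE rmorphM. Qed.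

Lemma adj0 : adj 0 = 0.
Proof. by apply/matrixP=> i j; rewrite !mxE rmorph0. Qed.

Lemma adjM A B : adj (A *m B) = adj B *m adj A.
Proof.
apply/matrixP=> i j; rewrite !mxE rmorph_sum; apply: eq_bigr => l _.
by rewrite !mxE rmorphM mulrC.
Qed.

Lemma adj_sum (I : finType) (F : I -> 'M[C]_N) :
  adj (\sum_i F i) = \sum_i adj (F i).
Proof. exact: (big_morph adj adjD adj0). Qed.

Lemma tr_adj A : \tr (adj A) = (\tr A)^*.
Proof. by rewrite /mxtrace rmorph_sum; apply: eq_bigr => i _; rewrite adjE. Qed.

Lemma comm_adj A B : adj (comm A B) = comm (adj B) (adj A).
Proof. by rewrite /comm adjB !adjM. Qed.

Lemma skew_adj A : skew_herm A <-> adj A = - A.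
Proof. by []. Qed.

Lemma comm_skew A B : skew_herm A -> skew_herm B -> skew_herm (comm A B).
Proof.
move=> /skew_adj hA /skew_adj hB; apply/skew_adj.
by rewrite comm_adj hA hB /comm !mulNmx !mulmxN !opprK opprB.
Qed.

Lemma tr_comm A B : \tr (comm A B) = 0.
Proof. by rewrite /comm linearB /= mxtrace_mulC subrr. Qed.

Lemma commDl A B Y : comm (A + B) Y = comm A Y + comm B Y.
Proof. by rewrite /comm mulmxDl mulmxDr opprD addrACA. Qed.
Lemma commDr A B Y : comm Y (A + B) = comm Y A + comm Y B.
Proof. by rewrite /comm mulmxDl mulmxDr opprD addrACA. Qed.
Lemma commNl A Y : comm (- A) Y = - comm A Y.
Proof. by rewrite /comm mulNmx mulmxN opprB opprK addrC. Qed.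
Lemma commNr A Y : comm Y (- A) = - comm Y A.
Proof. by rewrite /comm mulNmx mulmxN opprB opprK addrC. Qed.
Lemma commBl A B Y : comm (A - B) Y = comm A Y - comm B Y.
Proof. by rewrite commDl commNl. Qed.
Lemma commBr A B Y : comm Y (A - B) = comm Y A - comm Y B.
Proof. by rewrite commDr commNr. Qed.
Lemma commZl x A Y : comm (x *: A) Y = x *: comm A Y.
Proof. by rewrite /comm -scalemxAl -scalemxAr scalerBr. Qed.
Lemma commZr x A Y : comm Y (x *: A) = x *: comm Y A.
Proof. by rewrite /comm -scalemxAl -scalemxAr scalerBr. Qed.
Lemma comm0l Y : comm 0 Y = 0.
Proof. by rewrite /comm mul0mx mulmx0 subrr. Qed.
Lemma comm0r Y : comm Y 0 = 0.
Proof. by rewrite /comm mul0mx mulmx0 subrr. Qed.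
Lemma comm_suml (I : finType) (F : I -> 'M[C]_N) Y :
  comm (\sum_i F i) Y = \sum_i comm (F i) Y.
Proof. exact: (big_morph (fun A => comm A Y) (fun A B => commDl A B Y) (comm0l Y)). Qed.
Lemma comm_sumr (I : finType) (F : I -> 'M[C]_N) Y :
  comm Y (\sum_i F i) = \sum_i comm Y (F i).
Proof. exact: (big_morph (fun A => comm Y A) (fun A B => commDr A B Y) (comm0r Y)). Qed.

End S.
Section SB.
Variable C : numClosedFieldType.
Variable N : nat.
Implicit Types A B X Y Z : 'M[C]_N.

Definition nrm Z := \tr (adj Z *m Z).

Lemma nrmE Z : nrm Z = \sum_i \sum_l Z l i * (Z l i)^*.
Proof.
rewrite /nrm /mxtrace; apply: eq_bigr => i _; rewrite mxE.
by apply: eq_bigr => l _; rewrite adjE mulrC.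
Qed.

Lemma nrm_ge0 Z : 0 <= nrm Z.
Proof. by rewrite nrmE; apply: sumr_ge0 => i _; apply: sumr_ge0 => l _; apply: mul_conjC_ge0. Qed.

Lemma nrm_eq0 Z : nrm Z = 0 -> Z = 0.
Proof.
rewrite nrmE => h; apply/matrixP => l i; rewrite mxE.
have h1 := psumr_eq0P (fun i _ => sumr_ge0 _ (fun l _ => mul_conjC_ge0 (Z l i))) h.
have h2 := psumr_eq0P (fun l _ => mul_conjC_ge0 (Z l i)) (h1 i isT).
by apply/eqP; rewrite -mul_conjC_eq0 (h2 l isT).
Qed.


Lemma tr_cyc S U Z : \tr (U *m comm S Z) = \tr ((U *m S - S *m U) *m Z).
Proof.
rewrite /comm mulmxBr mulmxBl !linearB /= !mulmxA; congr (_ - _).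
by rewrite mxtrace_mulC mulmxA.
Qed.

Lemma key_id S Y : adj S = - S ->
  \tr (adj Y *m comm S (comm S Y)) = - nrm (comm S Y).
Proof.
move=> hS; rewrite tr_cyc /nrm comm_adj hS.
set W := comm S Y; set V := adj Y *m S - S *m adj Y.
have -> : comm (adj Y) (- S) = - V by rewrite /V /comm mulmxN mulNmx opprD.
by rewrite mulNmx raddfN opprK.
Qed.
Lemma ker_cas (I : finType) (X : I -> 'M[C]_N) Y :
  (forall i, skew_herm (X i)) -> \sum_i comm (X i) (comm (X i) Y) = 0 ->
  forall i, comm (X i) Y = 0.
Proof.
move=> hX h0 i.
have : \tr (adj Y *m \sum_i comm (X i) (comm (X i) Y)) = 0 by rewrite h0 mulmx0 linear0.
rewrite mulmx_sumr linear_sum /=.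
under eq_bigr => j _ do rewrite (key_id _ (hX j)).
rewrite sumrN => /eqP; rewrite oppr_eq0 => /eqP h.
apply: nrm_eq0; exact: (psumr_eq0P (fun j _ => nrm_ge0 _) h).
Qed.

End SB.
Section SC.
Variable C : numClosedFieldType.
Variable N : nat.

Lemma conj_weight m : (weight C N m)^* = weight C N m.
Proof. by rewrite /weight /spin rmorphB rmorphM fmorphV rmorphB rmorph1 !rmorph_nat. Qed.

Lemma jp_val (j : nat) :
  spin C N * (spin C N + 1) - weight C N j * (weight C N j + 1) = j%:R * (N%:R - j%:R) :> C.
Proof.
rewrite /weight /spin; have h2 : (2%:R : C) != 0 by rewrite pnatr_eq0.
by field.
Qed.

Lemma jp_nat (j : 'I_N) : (0 < j)%N ->
  spin C N * (spin C N + 1) - weight C N j * (weight C N j + 1) = (j * (N - j))%:R :> C.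
Proof. by move=> hj; rewrite jp_val natrM natrB // ltnW. Qed.

Lemma Jplus_real (i j : 'I_N) : (Jplus C N i j)^* = Jplus C N i j.
Proof.
rewrite !mxE; case: eqP => [hij|]; last by rewrite rmorph0.
rewrite jp_nat; last by rewrite -hij.
by apply: conj_Creal; apply: ger0_real; rewrite sqrtC_ge0 ler0n.
Qed.

Lemma Jplus_neq0 (i j : 'I_N) : i.+1 = j -> Jplus C N i j != 0.
Proof.
move=> hij; rewrite !mxE hij eqxx jp_nat; last by rewrite -hij.
rewrite sqrtC_eq0 pnatr_eq0 muln_eq0 negb_or -hij /= subn_eq0 -ltnNge.
by rewrite hij ltn_ord.
Qed.

Lemma adj_Jplus : adj (Jplus C N) = Jminus C N :> 'M[C]_N.
Proof. by apply/matrixP => i j; rewrite adjE Jplus_real /Jminus [RHS]mxE. Qed.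

Lemma adj_Jminus : adj (Jminus C N) = Jplus C N :> 'M[C]_N.
Proof. by apply/matrixP => i j; rewrite adjE /Jminus [in LHS]mxE Jplus_real. Qed.

Lemma adj_J3 : adj (J3 C N) = J3 C N :> 'M[C]_N.
Proof.
apply/matrixP => i j; rewrite adjE !mxE eq_sym.
by case: eqP => [->|_]; rewrite ?conj_weight ?rmorph0.
Qed.

Lemma rhoS_skew j : skew_herm (rhoS C N j).
Proof.
apply/skew_adj; rewrite /rhoS.
case: ifP => _; first by rewrite adjZ adjD adj_Jplus adj_Jminus addrC -scaleNr
  rmorphM rmorphN /= conjCi fmorphV rmorph_nat mulNr.
have hb : (- 1 / 2%:R : C)^* = - 1 / 2%:R.
  by rewrite rmorphM rmorphN /= fmorphV /= rmorph1 conjC_nat.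
case: ifP => _; first by rewrite adjZ adjB adj_Jplus adj_Jminus hb -opprB scalerN.
by rewrite adjZ adj_J3 rmorphN /= conjCi scaleNr.
Qed.

Lemma rhoX_skew (a : 'M[C]_3) i : (forall i j, a i j \is Num.real) ->
  skew_herm (rhoX N a i).
Proof.
move=> ha; apply/skew_adj; rewrite /rhoX adj_sum -sumrN; apply: eq_bigr => j _.
by rewrite adjZ (proj1 (skew_adj _) (rhoS_skew j)) conj_Creal // scalerN.
Qed.

End SC.
Section SD.
Variable C : numClosedFieldType.
Variable N : nat.
Implicit Types A B X Y Z : 'M[C]_N.

Definition cas Y := \sum_(j < 3) comm (rhoS C N j) (comm (rhoS C N j) Y).

Lemma casZ x A Y : comm (x *: A) (comm (x *: A) Y) = (x * x) *: comm A (comm A Y).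
Proof. by rewrite !commZl commZr scalerA. Qed.

Lemma casD A B Y : comm (A + B) (comm (A + B) Y) =
  comm A (comm A Y) + comm A (comm B Y) + (comm B (comm A Y) + comm B (comm B Y)).
Proof. by rewrite !commDl !commDr. Qed.

Lemma casB A B Y : comm (A - B) (comm (A - B) Y) =
  comm A (comm A Y) - comm A (comm B Y) - (comm B (comm A Y) - comm B (comm B Y)).
Proof. by rewrite !commBl !commBr. Qed.

Lemma cas_expr Y : cas Y = - (comm (J3 C N) (comm (J3 C N) Y) +
   2%:R^-1 *: (comm (Jplus C N) (comm (Jminus C N) Y) + comm (Jminus C N) (comm (Jplus C N) Y))).
Proof.
rewrite /cas !big_ord_recr big_ord0 /= add0r /rhoS /=.
rewrite !casZ casD casB.
have hi : 'i * 'i = -1 :> C by rewrite -expr2 sqrCi.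
have h2 : (2%:R : C) != 0 by rewrite pnatr_eq0.
set z := 'i in hi *.
have -> : (- z / 2%:R) * (- z / 2%:R) = (z * z) / (2%:R * 2%:R) by field.
have -> : (- z) * (- z) = (z * z) by ring.
rewrite hi; apply/matrixP => i j; rewrite !mxE.
by field.
Qed.

End SD.
Section SE.
Variable C : numClosedFieldType.
Variable N : nat.
Implicit Types A B X Y Z : 'M[C]_N.

Lemma aTa (a : 'M[C]_3) c : c != 0 -> a *m a^T = c%:M -> a^T *m a = c%:M.
Proof.
move=> hc h.
have h1 : a *m (c^-1 *: a^T) = 1%:M by rewrite -scalemxAr h scale_scalar_mx mulVf.
have := mulmx1C h1; rewrite -scalemxAl => h2.
by rewrite -[a^T *m a]scale1r -(mulfV hc) -scalerA h2 scale_scalar_mx mulr1.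
Qed.

Lemma comm_rhoX (a : 'M[C]_3) i Y :
  comm (rhoX N a i) Y = \sum_j a i j *: comm (rhoS C N j) Y.
Proof. by rewrite /rhoX comm_suml; apply: eq_bigr => j _; rewrite commZl. Qed.

Lemma Lap_cas (a : 'M[C]_3) c Y : c != 0 -> a *m a^T = c%:M -> Lap a Y = c *: cas Y.
Proof.
move=> hc /(aTa hc) h.
rewrite /Lap /cas scaler_sumr.
have e1 : forall i, comm (rhoX N a i) (comm (rhoX N a i) Y) =
   \sum_j \sum_l (a i j * a i l) *: comm (rhoS C N j) (comm (rhoS C N l) Y).
  move=> i; rewrite comm_rhoX; apply: eq_bigr => j _.
  rewrite comm_rhoX comm_sumr scaler_sumr; apply: eq_bigr => l _.
  by rewrite commZr scalerA.
under eq_bigr => i _ do rewrite e1.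
rewrite exchange_big /=; apply: eq_bigr => j _.
rewrite exchange_big /= (bigD1 j) //= [X in _ + X]big1 ?addr0.
  by rewrite -scaler_suml; congr (_ *: _); have := congr1 (fun M : 'M[C]_3 => M j j) h; rewrite !mxE eqxx mulr1n => <-; apply: eq_bigr => i _; rewrite mxE.
move=> l hl; rewrite -scaler_suml.
have := congr1 (fun M : 'M[C]_3 => M j l) h; rewrite !mxE eq_sym (negPf hl) mulr0n => h0.
move: h0; under eq_bigr => i _ do rewrite mxE; move=> ->.
by rewrite scale0r.
Qed.

End SE.
Section SF.
Variable C : numClosedFieldType.
Variable N : nat.
Implicit Types A B X Y Z : 'M[C]_N.

Lemma J3_diag : J3 C N = diag_mx (\row_i weight C N i).
Proof. by apply/matrixP => i j; rewrite !mxE; case: (i == j). Qed.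

Lemma commJ3E Y i j : comm (J3 C N) Y i j = (weight C N i - weight C N j) * Y i j.
Proof. by rewrite /comm J3_diag mul_diag_mx mul_mx_diag !mxE [RHS]mulrBl [Y i j * _]mulrC. Qed.

Lemma diag_of_J3 Y : comm (J3 C N) Y = 0 -> forall i j : 'I_N, i != j -> Y i j = 0.
Proof.
move=> h i j hij; have := congr1 (fun M : 'M[C]_N => M i j) h; rewrite commJ3E mxE.
move/eqP; rewrite mulf_eq0 => /orP [|/eqP //].
rewrite /weight subr_eq0 => /eqP /addrI /oppr_inj /eqP; rewrite eqr_nat => hji.
by move: hij; rewrite -(inj_eq val_inj) hji.
Qed.

Lemma commJpE Y i j : (forall i j : 'I_N, i != j -> Y i j = 0) ->
  comm (Jplus C N) Y i j = Jplus C N i j * (Y j j - Y i i).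
Proof.
move=> hY; rewrite /comm !mxE (bigD1 j) //= big1 ?addr0; last first.
  by move=> l hl; rewrite hY ?mulr0.
rewrite (bigD1 i) //= big1 ?addr0; last first.
  by move=> l hl; rewrite hY ?mul0r // eq_sym.
by rewrite mulrBr [Y i i * _]mulrC !mxE.
Qed.

Lemma scalar_of_J Y : comm (J3 C N) Y = 0 -> comm (Jplus C N) Y = 0 ->
  \tr Y = 0 -> Y = 0.
Proof.
move=> h3 hp ht; have hd := diag_of_J3 h3.
have hstep : forall i j : 'I_N, i.+1 = j :> nat -> Y i i = Y j j.
  move=> i j hij; have := congr1 (fun M : 'M[C]_N => M i j) hp.
  rewrite [X in _ = X]mxE commJpE // => /eqP; rewrite mulf_eq0 (negPf (@Jplus_neq0 C _ _ _ hij)) /=.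
  by rewrite subr_eq0 => /eqP ->.
have hall : forall t (i j : 'I_N), (j : nat) = (i + t)%N -> Y i i = Y j j.
  elim => [|t IH] i j hij; first by congr (Y _ _); apply: val_inj; rewrite /= hij addn0.
  have ht' : (i + t < N)%N by rewrite (leq_ltn_trans _ (ltn_ord j)) // hij addnS.
  by rewrite (IH i (Ordinal ht')) //; apply: hstep; rewrite /= hij addnS.
have heq : forall i j : 'I_N, Y i i = Y j j.
  move=> i j; case: (leqP i j) => hij.
    by apply: (hall (j - i)%N); rewrite subnKC.
  by symmetry; apply: (hall (i - j)%N); rewrite subnKC // ltnW.
apply/matrixP => i j; rewrite mxE; case: (eqVneq i j) => [<-|/hd //].
have : \tr Y = Y i i *+ N.
  by rewrite /mxtrace (eq_bigr (fun _ => Y i i)) ?sumr_const ?card_ord // => l _; rewrite (heq l i).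
rewrite ht => /esym/eqP; rewrite mulrn_eq0 => /orP [/eqP hN|/eqP //].
by have := ltn_ord i; rewrite [X in (_ < X)%N]hN.
Qed.

Lemma cas_ker Y : cas Y = 0 -> \tr Y = 0 -> Y = 0.
Proof.
move=> h ht; have hc := ker_cas (@rhoS_skew C N) h.
apply: scalar_of_J ht.
  have := hc 2%:R; rewrite /rhoS /= commZl => /eqP; rewrite scaler_eq0 oppr_eq0.
  by rewrite (negPf (neq0Ci C)) => /eqP.
have h0 := hc 0; have h1 := hc 1.
rewrite /rhoS /= commZl in h0; rewrite /rhoS /= commZl in h1.
move/eqP: h0; rewrite scaler_eq0 mulf_eq0 oppr_eq0 (negPf (neq0Ci C)) invr_eq0 pnatr_eq0 /=.
move/eqP: h1; rewrite scaler_eq0 mulf_eq0 oppr_eq0 oner_eq0 invr_eq0 pnatr_eq0 /=.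
move=> /eqP; rewrite commBl => h1 /eqP; rewrite commDl => h0.
have : comm (Jplus C N) Y *+ 2 = 0.
  by rewrite mulr2n -{2}(subrK (comm (Jminus C N) Y) (comm (Jplus C N) Y)) h1 add0r.
move/eqP; rewrite -scaler_nat scaler_eq0 pnatr_eq0 /= => /eqP //.
Qed.

End SF.
Section SG.
Variable C : numClosedFieldType.
Variable N : nat.
Variable k : nat.
Implicit Types A B X Y Z : 'M[C]_N.

Definition shiftP (r : int) A := forall i j : 'I_N,
  ~ (((k : int) %| (i : int) - (j : int) - r)%Z) -> A i j = 0.

Lemma shift_mul r s t A B : t = r + s -> shiftP r A -> shiftP s B -> shiftP t (A *m B).
Proof.
move=> -> hA hB i j hn; rewrite mxE big1 // => l _.
case: (boolP ((k : int) %| (i : int) - (l : int) - r)%Z) => h1; last first.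
  by rewrite hA ?mul0r //; apply/negP.
case: (boolP ((k : int) %| (l : int) - (j : int) - s)%Z) => h2; last first.
  by rewrite hB ?mulr0 //; apply/negP.
exfalso; apply: hn.
have -> : (i : int) - (j : int) - (r + s) = ((i : int) - (l : int) - r) + ((l : int) - (j : int) - s) by ring.
exact: rpredD.
Qed.

Lemma shiftD r A B : shiftP r A -> shiftP r B -> shiftP r (A + B).
Proof. by move=> hA hB i j hn; rewrite mxE hA // hB // addr0. Qed.

Lemma shiftN r A : shiftP r A -> shiftP r (- A).
Proof. by move=> hA i j hn; rewrite mxE hA // oppr0. Qed.

Lemma shiftZ r x A : shiftP r A -> shiftP r (x *: A).
Proof. by move=> hA i j hn; rewrite mxE hA // mulr0. Qed.

Lemma shift_comm r s t A B : t = r + s -> shiftP r A -> shiftP s B -> shiftP t (comm A B).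
Proof.
move=> ht hA hB; apply: shiftD; first exact: shift_mul ht hA hB.
by apply: shiftN; apply: (shift_mul _ hB hA); rewrite ht addrC.
Qed.

Lemma shift_Jplus : shiftP (-1) (Jplus C N).
Proof.
move=> i j hn; rewrite mxE; case: eqP => // hij; exfalso; apply: hn.
by rewrite -hij -addn1 PoszD opprD addrA subrr add0r subrr dvdz0.
Qed.

Lemma shift_Jminus : shiftP 1 (Jminus C N).
Proof.
move=> i j hn; rewrite /Jminus mxE shift_Jplus // => hd; apply: hn.
have -> : (i : int) - (j : int) - 1 = - ((j : int) - (i : int) - (-1)) by ring.
by rewrite rpredN.
Qed.

Lemma shift_J3 : shiftP 0 (J3 C N).
Proof.
move=> i j hn; rewrite mxE; case: eqP => // hij; exfalso; apply: hn.
by rewrite hij subrr subr0 dvdz0.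
Qed.

Lemma shift_cas Y : shiftP 0 Y -> shiftP 0 (cas Y).
Proof.
move=> hY; rewrite cas_expr; apply: shiftN; apply: shiftD.
  apply: (shift_comm (esym (addr0 (0:int))) shift_J3).
  exact: (shift_comm (esym (addr0 (0:int))) shift_J3 hY).
apply: shiftZ; apply: shiftD.
  apply: (shift_comm (esym (addNr (1:int))) shift_Jplus).
  exact: (shift_comm (esym (addr0 (1:int))) shift_Jminus hY).
apply: (shift_comm (esym (subrr (1:int))) shift_Jminus).
exact: (shift_comm (esym (addr0 (-1:int))) shift_Jplus hY).
Qed.

Lemma band_shift A : (forall i j : 'I_N, ~ (((k : int) %| (i : int) - (j : int))%Z) -> A i j = 0)
  <-> shiftP 0 A.
Proof. by split=> h i j hn; apply: h; move: hn; rewrite subr0. Qed.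

End SG.
Section SH.
Variable C : numClosedFieldType.
Variable N : nat.

Lemma lin_surj (f : 'M[C]_N -> 'M[C]_N) : linear f ->
  (forall Y, f Y = 0 -> Y = 0) -> forall B, exists Y, f Y = B.
Proof.
move=> lin_f inj0 B.
pose flM := GRing.isLinear.Build _ _ _ _ f lin_f.
pose fL : {linear _ -> _} := HB.pack f flM.
pose g : 'End('M[C]_N) := linfun fL.
have gE : forall u, g u = f u by move=> u; rewrite /g lfunE.
have hk : lker g == 0%VS.
  apply/lker0P => u v; rewrite !gE => huv; apply/eqP; rewrite -subr_eq0; apply/eqP.
  by apply: inj0; have := raddfB fL u v => /= ->; rewrite huv subrr.
exists ((g^-1)%VF B); by rewrite -gE lker0_lfunVK.
Qed.

End SH.
Section SM.
Variable C : numClosedFieldType.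
Variables (N k : nat) (a : 'M[C]_3) (c : C).
Hypothesis hN : (0 < N)%N.
Hypothesis hc : c != 0.
Hypothesis ha : forall i j, a i j \is Num.real.
Hypothesis haa : a *m a^T = c%:M.
Implicit Types A B X Y Z : 'M[C]_N.

Lemma comm_anti A B : comm A B = - comm B A.
Proof. by rewrite /comm opprB. Qed.

Lemma L_D A B : Lap a (A + B) = Lap a A + Lap a B.
Proof. by rewrite /Lap -big_split; apply: eq_bigr => i _; rewrite !commDr. Qed.

Lemma L_Z x A : Lap a (x *: A) = x *: Lap a A.
Proof. by rewrite /Lap scaler_sumr; apply: eq_bigr => i _; rewrite !commZr. Qed.

Lemma L_N A : Lap a (- A) = - Lap a A.
Proof. by rewrite -scaleN1r L_Z scaleN1r. Qed.

Lemma L_B A B : Lap a (A - B) = Lap a A - Lap a B.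
Proof. by rewrite L_D L_N. Qed.

Lemma L_lin : linear (@Lap C N a).
Proof. by move=> x A B; rewrite L_D L_Z. Qed.

Lemma L_tr Y : \tr (Lap a Y) = 0.
Proof. by rewrite /Lap linear_sum /= big1 // => i _; rewrite tr_comm. Qed.

Lemma L_skew Y : skew_herm Y -> skew_herm (Lap a Y).
Proof.
move=> hY; apply/skew_adj; rewrite /Lap adj_sum -sumrN; apply: eq_bigr => i _.
have hX := rhoX_skew N i ha.
by apply/skew_adj; apply: comm_skew => //; apply: comm_skew.
Qed.

Lemma L_adj Y : Lap a (adj Y) = adj (Lap a Y).
Proof.
rewrite /Lap adj_sum; apply: eq_bigr => i _.
have hX : adj (rhoX N a i) = - rhoX N a i := rhoX_skew N i ha.
by rewrite !comm_adj hX !commNr -!comm_anti.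
Qed.

Lemma L_ker Y : Lap a Y = 0 -> \tr Y = 0 -> Y = 0.
Proof.
move=> h ht; apply: cas_ker ht; move/eqP: h; rewrite (Lap_cas _ hc haa) scaler_eq0.
by rewrite (negPf hc) => /eqP.
Qed.

Lemma L_band Y : shiftP k 0 Y -> shiftP k 0 (Lap a Y).
Proof. by move=> hY; rewrite (Lap_cas _ hc haa); apply: shiftZ; apply: shift_cas. Qed.

Definition Pi Y : 'M[C]_N :=
  \matrix_(i, j) (if ((k : int) %| (i : int) - (j : int))%Z then Y i j else 0).

Lemma Pi_band Y : shiftP k 0 (Pi Y).
Proof. by move=> i j; rewrite subr0 mxE => /negP/negPf ->. Qed.

Lemma Pi_id Y : shiftP k 0 Y -> Pi Y = Y.
Proof.
move=> hY; apply/matrixP => i j; rewrite mxE; case: ifP => // /negP hn.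
by rewrite hY // subr0.
Qed.

Lemma Pi_lin x A B : Pi (x *: A + B) = x *: Pi A + Pi B.
Proof. by apply/matrixP => i j; rewrite !mxE; case: ifP; rewrite ?mulr0 ?addr0. Qed.

Lemma Pi_0 : Pi 0 = 0.
Proof. by apply/matrixP => i j; rewrite !mxE; case: ifP. Qed.

Lemma Pi_B A B : Pi (A - B) = Pi A - Pi B.
Proof. by rewrite -scaleN1r addrC Pi_lin scaleN1r addrC. Qed.

Lemma scalar_band x : shiftP k 0 (x%:M : 'M[C]_N).
Proof.
move=> i j; rewrite mxE; case: eqP => [->|]; last by rewrite mulr0n.
by rewrite subrr subr0 dvdz0.
Qed.

Definition Vm Y := Lap a (Pi Y) + (\tr (Pi Y))%:M.
Definition Mm Y := Pi (Vm Y) + (Y - Pi Y).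

Lemma Vm_band Y : shiftP k 0 (Vm Y).
Proof. by apply: shiftD; [apply: L_band; apply: Pi_band | apply: scalar_band]. Qed.

Lemma Mm_lin : linear Mm.
Proof.
move=> x A B; rewrite /Mm /Vm !Pi_lin L_D L_Z linearP /= raddfD /= -scale_scalar_mx.
rewrite addrACA -scalerDr Pi_lin.
move: (Pi (Lap a (Pi A) + (\tr (Pi A))%:M)) (Pi (Lap a (Pi B) + (\tr (Pi B))%:M)) (Pi A) (Pi B).
move=> U1 U2 U3 U4; apply/matrixP => i j; rewrite !mxE.
set p := (if _ then _ else _); set q := (if _ then _ else _).
move: p q (A i j) (B i j) (U3 i j) (U4 i j) => p q a1 b1 u3 u4; ring.
Qed.

Lemma tr_scalar x : \tr (x%:M : 'M[C]_N) = x *+ N.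
Proof. exact: mxtrace_scalar. Qed.

Lemma PiPi Y : Pi (Pi Y) = Pi Y.
Proof. exact: Pi_id (Pi_band Y). Qed.

Lemma Pi_rest Y : Pi (Y - Pi Y) = 0.
Proof. by rewrite Pi_B PiPi subrr. Qed.


Lemma Pi_D A B : Pi (A + B) = Pi A + Pi B.
Proof. by rewrite -[A]scale1r Pi_lin !scale1r. Qed.

Lemma Mm_Pi Y : Pi (Mm Y) = Vm Y.
Proof. by rewrite /Mm Pi_D Pi_rest addr0 PiPi (Pi_id (Vm_band Y)). Qed.

Lemma Mm_E Y : Mm Y = Vm Y + (Y - Pi Y).
Proof. by rewrite /Mm (Pi_id (Vm_band Y)). Qed.

Lemma Vm_tr Y : \tr (Vm Y) = \tr (Pi Y) *+ N.
Proof. by rewrite /Vm raddfD /= L_tr add0r mxtrace_scalar. Qed.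

Lemma natmul_eq0 (x : C) : x *+ N = 0 -> x = 0.
Proof. by move/eqP; rewrite mulrn_eq0 => /orP [/eqP hN0|/eqP //]; move: hN; rewrite hN0. Qed.

Lemma Mm_inj Y : Mm Y = 0 -> Y = 0.
Proof.
move=> h.
have hV : Vm Y = 0 by rewrite -Mm_Pi h Pi_0.
have ht : \tr (Pi Y) = 0 by apply: natmul_eq0; rewrite -Vm_tr hV raddf0.
have hL : Lap a (Pi Y) = 0 by move: hV; rewrite /Vm ht raddf0 addr0.
have hP : Pi Y = 0 := L_ker hL ht.
by move: h; rewrite Mm_E hV hP add0r subr0.
Qed.

Lemma L_surj B : D0 k B -> exists A, D0 k A /\ Lap a A = B.
Proof.
move=> [[hBs hBb] [_ hBt]].
have hBb' : shiftP k 0 B by apply/band_shift.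
have [Y hY] := lin_surj Mm_lin Mm_inj B.
have hV : Vm Y = B by rewrite -Mm_Pi hY Pi_id.
have hYP : Y - Pi Y = 0 by move: hY; rewrite Mm_E hV -[X in _ = X]addr0 => /addrI.
have hYe : Pi Y = Y by apply/esym/eqP; rewrite -subr_eq0 hYP.
have ht : \tr Y = 0 by rewrite -hYe; apply: natmul_eq0; rewrite -Vm_tr hV.
have hL : Lap a Y = B by move: hV; rewrite /Vm hYe ht raddf0 addr0.
have hsk : adj Y = - Y.
  have : Y - (- adj Y) = 0.
    apply: L_ker.
      by rewrite L_B L_N L_adj hL (proj1 (skew_adj _) hBs) opprK subrr.
    by rewrite raddfB /= raddfN /= tr_adj ht conjC0 oppr0 subr0.
  by rewrite opprK => /eqP; rewrite addr_eq0 => /eqP hY2; rewrite {2}hY2 opprK.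
exists Y; split => //.
have hYb : shiftP k 0 Y by rewrite -hYe; apply: Pi_band.
by split; split => //; apply/band_shift.
Qed.

End SM.
Unset Implicit Arguments.

Theorem mainTheorem5 (C : numClosedFieldType) (N k : nat) (a : 'M[C]_3) (c : C) :
  (2 <= N)%N -> (0 < k <= N)%N ->
  (* X_i = sum_j a i j e_j is an orthonormal basis of su(2) for the
     ad-invariant form c^{-1} <.,.>_std, with c > 0 *)
  (forall i j, a i j \is Num.real) -> 0 < c -> a *m a^T = c%:M ->
  (* Delta_N maps D_0(N,k) into itself ... *)
  (forall A : 'M[C]_N, D0 k A -> D0 k (Lap a A)) /\
  (* ... bijectively *)
  (forall B : 'M[C]_N, D0 k B -> exists! A : 'M[C]_N, D0 k A /\ Lap a A = B) /\
  (* the Euler vector field W |-> [Delta_N^{-1} W, W]_N preserves D_0(N,k):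
     P = Delta_N^{-1} W is the (unique) P in su(N) with Delta_N P = W *)
  (forall W P : 'M[C]_N, D0 k W -> suN P -> Lap a P = W ->
     D0 k (qbracket P W)).
Proof.
move=> hN2 _ ha hc0 haa.
have hN : (0 < N)%N by apply: leq_trans hN2.
have hc : c != 0 by rewrite gt_eqF.
have uniq0 : forall A1 A2 : 'M[C]_N, suN A1 -> suN A2 -> Lap a A1 = Lap a A2 -> A1 = A2.
  move=> A1 A2 [_ h1] [_ h2] hL; apply/eqP; rewrite -subr_eq0; apply/eqP.
  apply: (L_ker hc haa); first by rewrite L_B hL subrr.
  by rewrite raddfB /= h1 h2 subrr.
split.
  move=> A [[hAs hAb] [_ hAt]].
  have hs := L_skew ha hAs.
  split; split => //; last exact: L_tr.
  by apply/band_shift; apply: (L_band hc haa); apply/band_shift.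
split.
  move=> B hB; have [A [hA hL]] := L_surj hN hc ha haa hB.
  exists A; split => // A2 [hA2 hL2]; apply: uniq0; [exact: hA.2 | exact: hA2.2 | by rewrite hL hL2].
move=> W P hW hP hL.
have [A [hA hLA]] := L_surj hN hc ha haa hW.
have -> : P = A by apply: uniq0 => //; [exact: hA.2 | rewrite hL hLA].
move: hA hW => [[hAs hAb] _] [[hWs hWb] _].
have hr : (N%:R * sqrtC N%:R)^* = N%:R * sqrtC N%:R :> C.
  by apply: conj_Creal; apply: ger0_real; rewrite mulr_ge0 ?ler0n ?sqrtC_ge0.
have hcs := comm_skew hAs hWs.
have hsk : skew_herm (qbracket A W).
  apply/skew_adj; rewrite /qbracket adjZ hr (proj1 (skew_adj _) hcs) scalerN //.
split; split => //.
  apply/band_shift; apply: shiftZ; apply: (shift_comm (esym (addr0 (0:int)))); exact/band_shift.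
by rewrite /qbracket linearZ /= tr_comm mulr0.
Qed.
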